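(* Let $\sigma$ be a two-qubit density matrix, $U$ a single-qubit unitary, and $R>0$, $T>0$. Consider the following test round. The client chooses $d\in\{0,1\}$, $\theta\in\Theta$ and $r\in\{0,1\}$ uniformly and independently. A dummy qubit in state $|d\rangle$ and a trap qubit in state $|+_\theta\rangle$ are each transmitted to the server through the rotated teleportation channel $\Lambda_{\sigma,U}$ (each using its own copy of $\sigma$). The entangled states are delivered at random times whose inter-delivery times are independent and identically distributed; let $\Delta t$ be the time between the delivery of the two qubits, with $\mathbb{E}[\Delta t]=1/R$, and $\Delta t$ independent of $(d,\theta,r)$. The qubit delivered first (either one) is stored during time $\Delta t$ in a depolarizing memory with coherence time $T$, i.e. it undergoes $\rho\mapsto p\rho+(1-p)\mathbf 1/2$ with $p=e^{-\Delta t/T}$. All local operations are noiseless and instantaneous. The server then applies a controlled-$Z$ gate to the two qubits and measures the trap qubit in the basis $\{|+_\delta\rangle,|-_\delta\rangle\}$ with $\delta=\theta+r\pi$ (outcome $0$ for $|+_\delta\rangle$, $1$ for $|-_\delta\rangle$); the round fails if the outcome differs from $d\oplus r$. Let $q$ be the expected failure probability (averaged over $d,\theta,r,\Delta t$ and the measurement). Define $$\bar F_{\mathrm{dummy}}=\tfrac12\big(\langle 0|\Lambda_{\sigma,U}(|0\rangle\langle0|)|0\rangle+\langle 1|\Lambda_{\sigma,U}(|1\rangle\langle1|)|1\rangle\big),\qquad \bar F_{\mathrm{trap}}=\tfrac18\sum_{\theta\in\Theta}\langle+_\theta|\Lambda_{\sigma,U}(|+_\theta\rangle\langle+_\theta|)|+_\theta\rangle.$$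 If $\bar F_{\mathrm{dummy}}(1-\bar F_{\mathrm{trap}})+\bar F_{\mathrm{trap}}(1-\bar F_{\mathrm{dummy}})\le\frac12$, then $$q\le e^{-\frac{1}{RT}}\Big[\bar F_{\mathrm{dummy}}(1-\bar F_{\mathrm{trap}})+\bar F_{\mathrm{trap}}(1-\bar F_{\mathrm{dummy}})\Big]+\tfrac12\big(1-e^{-\frac{1}{RT}}\big).$$
   Context: $\Theta=\{i\pi/4\}_{0\le i\le7}$ and $|\pm_\theta\rangle=\frac1{\sqrt2}(|0\rangle\pm e^{i\theta}|1\rangle)$. Let $|\Phi^+\rangle=\frac1{\sqrt2}(|00\rangle+|11\rangle)$ and $|\Phi_{ij}\rangle=(X^iZ^j\otimes\mathbf 1)|\Phi^+\rangle$ for $i,j\in\{0,1\}$. For a two-qubit state $\sigma$ on registers $S$ (sender) and $R$ (receiver), the teleportation channel is the single-qubit channel $\Lambda_\sigma(\rho)=\sum_{i,j\in\{0,1\}}X^iZ^j\,\langle\Phi_{ij}|_{IS}(\rho_I\otimes\sigma_{SR})|\Phi_{ij}\rangle_{IS}\,(X^iZ^j)^\dagger$ (Bell measurement on the input register $I$ and $S$, followed by Pauli correction on $R$). For a single-qubit unitary $U$, the rotated teleportation channel is $\Lambda_{\sigma,U}(\rho)=U^\dagger\Lambda_\sigma(U\rho U^\dagger)U$. *)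

(* Defs.v *)
From mathcomp Require Import all_boot all_algebra.
From mathcomp Require Import complex mxtens.
From mathcomp Require Import all_classical all_reals all_analysis.
Set Implicit Arguments. Unset Strict Implicit. Unset Printing Implicit Defensive.
Import GRing.Theory Num.Theory.
Local Open Scope ring_scope.

Section Qubits.
Variable R : realType.
Local Notation C := R[i].

Definition adj {m n} (A : 'M[C]_(m, n)) : 'M[C]_(n, m) := (map_mx conjc A)^T.

Definition density {n} (rho : 'M[C]_n) : Prop :=
  adj rho = rho /\ (forall v : 'cV[C]_n, 0 <= (adj v *m rho *m v) 0 0) /\ \tr rho = 1.

Definition unitary {n} (U : 'M[C]_n) : Prop := adj U *m U = 1%:M.

Definition ket (b : bool) : 'cV[C]_2 := \col_(k < 2) ((k : nat) == b)%:R.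

Definition expi (t : R) : C := (cos t +i* sin t)%C.
Definition invsqrt2 : C := ((Num.sqrt (2 : R))^-1)%:C%C.

Definition ket_plus (t : R) : 'cV[C]_2 := invsqrt2 *: (ket false + expi t *: ket true).
Definition ket_minus (t : R) : 'cV[C]_2 := invsqrt2 *: (ket false - expi t *: ket true).

Definition proj {n} (v : 'cV[C]_n) : 'M[C]_n := v *m adj v.

Definition theta_of (k : 'I_8) : R := (k%:R * pi) / 4.

Definition PX : 'M[C]_2 := \matrix_(i < 2, j < 2) ((i : nat) != j)%:R.
Definition PZ : 'M[C]_2 := \matrix_(i < 2, j < 2) (if (i : nat) == j then (-1) ^+ i else 0).
Definition pauli (i j : bool) : 'M[C]_2 :=
  (if i then PX else 1%:M) *m (if j then PZ else 1%:M).

Definition PhiP : 'cV[C]_(2 * 2) :=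
  invsqrt2 *: (tensmx (ket false) (ket false) + tensmx (ket true) (ket true)).
Definition Phi (i j : bool) : 'cV[C]_(2 * 2) := tensmx (pauli i j) (1%:M : 'M[C]_2) *m PhiP.

Definition bellbra (i j : bool) : 'M[C]_(1 * 2, (2 * 2) * 2) :=
  tensmx (adj (Phi i j)) (1%:M : 'M[C]_2).

(** teleportation channel Lambda_sigma; registers ordered I, S, R *)
Definition teleport (sigma : 'M[C]_(2 * 2)) (rho : 'M[C]_2) : 'M[C]_2 :=
  \sum_(i : bool) \sum_(j : bool)
     pauli i j *m (bellbra i j *m tensmx rho sigma *m adj (bellbra i j)) *m adj (pauli i j).

Definition rteleport (sigma : 'M[C]_(2 * 2)) (U : 'M[C]_2) (rho : 'M[C]_2) : 'M[C]_2 :=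
  adj U *m teleport sigma (U *m rho *m adj U) *m U.

Definition depol (p : R) (rho : 'M[C]_2) : 'M[C]_2 :=
  p%:C%C *: rho + ((1 - p) / 2)%:C%C *: 1%:M.

Definition CZ : 'M[C]_(2 * 2) :=
  tensmx (proj (ket false)) (1%:M : 'M[C]_2) + tensmx (proj (ket true)) PZ.

(** probability that the round fails for fixed d, theta, r, and memory
    parameter p; [trap_first] says which qubit is delivered first (and hence
    stored in memory). Register order: dummy (x) trap. *)
Definition round_fail (sigma : 'M[C]_(2 * 2)) (U : 'M[C]_2) (trap_first : bool)
    (p : R) (d : bool) (k : 'I_8) (r : bool) : R :=
  let th := theta_of k in
  let rd := rteleport sigma U (proj (ket d)) in
  let rt := rteleport sigma U (proj (ket_plus th)) in
  let rd' := if trap_first then rd else depol p rd in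
  let rt' := if trap_first then depol p rt else rt in
  let rho := CZ *m tensmx rd' rt' *m adj CZ in
  let delta := th + r%:R * pi in
  (* the failing outcome is the one different from d xor r *)
  let wrong := ~~ (d (+) r) in
  let v := if wrong then ket_minus delta else ket_plus delta in
  complex.Re (\tr (tensmx (1%:M : 'M[C]_2) (proj v) *m rho)).

Definition avg_fail (sigma : 'M[C]_(2 * 2)) (U : 'M[C]_2) (trap_first : bool) (p : R) : R :=
  (32%:R)^-1 * \sum_(d : bool) \sum_(k < 8) \sum_(r : bool)
                 round_fail sigma U trap_first p d k r.

Definition fid (sigma : 'M[C]_(2 * 2)) (U : 'M[C]_2) (v : 'cV[C]_2) : R :=
  complex.Re ((adj v *m rteleport sigma U (proj v) *m v) 0 0).

Definition Fdummy sigma U : R :=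
  2^-1 * (fid sigma U (ket false) + fid sigma U (ket true)).

Definition Ftrap sigma U : R :=
  8^-1 * \sum_(k < 8) fid sigma U (ket_plus (theta_of k)).

End Qubits.

(* Main.v *)
Require Import Defs.
From mathcomp Require Import all_boot all_algebra.
From mathcomp Require Import complex mxtens.
From mathcomp Require Import all_classical all_reals all_analysis.
From mathcomp Require Import ring lra.
Import GRing.Theory Num.Theory.
Local Open Scope ring_scope.
Set Implicit Arguments. Unset Strict Implicit. Unset Printing Implicit Defensive.

Lemma ord2' (i : 'I_2) : i = ord0 \/ i = lift ord0 ord0.
Proof. by case: i => [[|[|//]]] H; [left|right]; apply: val_inj. Qed.

Ltac b2 a b := case: (ord2' a) => ->; case: (ord2' b) => ->.
Ltac ex2 := rewrite ?(mxE, big_ord_recl, big_ord0); rewrite /bump /=.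

Section Q.
Variable R : realType.
Local Notation C := R[i].

Lemma adj_mul m n p (A : 'M[C]_(m,n)) (B : 'M[C]_(n,p)) : adj (A *m B) = adj B *m adj A.
Proof. by rewrite /adj map_mxM trmx_mul. Qed.
Lemma adjK m n (A : 'M[C]_(m,n)) : adj (adj A) = A.
Proof. by apply/matrixP=> i j; rewrite !mxE conjcK. Qed.
Lemma adj_tens m n p q (A : 'M[C]_(m,n)) (B : 'M[C]_(p,q)) : adj (tensmx A B) = tensmx (adj A) (adj B).
Proof. by apply/matrixP=> i j; rewrite !mxE rmorphM. Qed.
Lemma adjD m n (A B : 'M[C]_(m,n)) : adj (A + B) = adj A + adj B.
Proof. by apply/matrixP=> i j; rewrite !mxE rmorphD. Qed.
Lemma adjZ m n c (A : 'M[C]_(m,n)) : adj (c *: A) = (conjc c) *: adj A.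
Proof. by apply/matrixP=> i j; rewrite !mxE rmorphM. Qed.
Lemma adj1 n : adj (1%:M : 'M[C]_n) = 1%:M.
Proof. by apply/matrixP=> i j; rewrite !mxE conjc_nat eq_sym. Qed.
Lemma adj_sum n (I : finType) (F : I -> 'M[C]_n) : adj (\sum_i F i) = \sum_i adj (F i).
Proof. by apply/matrixP=> i j; rewrite !mxE !summxE rmorph_sum; apply: eq_bigr=> k _; rewrite !mxE. Qed.
Lemma tr_tens m n (A : 'M[C]_m) (B : 'M[C]_n) : \tr (tensmx A B) = \tr A * \tr B.
Proof. by rewrite /mxtrace mulr_sum; apply: eq_bigr=> i _; rewrite mxE. Qed.
Lemma tensDl m n p q (A A' : 'M[C]_(m,n)) (B : 'M[C]_(p,q)) : tensmx (A + A') B = tensmx A B + tensmx A' B.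
Proof. by apply/matrixP=> i j; rewrite !mxE mulrDl. Qed.
Lemma tensDr m n p q (A : 'M[C]_(m,n)) (B B' : 'M[C]_(p,q)) : tensmx A (B + B') = tensmx A B + tensmx A B'.
Proof. by apply/matrixP=> i j; rewrite !mxE mulrDr. Qed.
Lemma tensZl m n p q c (A : 'M[C]_(m,n)) (B : 'M[C]_(p,q)) : tensmx (c *: A) B = c *: tensmx A B.
Proof. by apply/matrixP=> i j; rewrite !mxE mulrA. Qed.
Lemma tensZr m n p q c (A : 'M[C]_(m,n)) (B : 'M[C]_(p,q)) : tensmx A (c *: B) = c *: tensmx A B.
Proof. by apply/matrixP=> i j; rewrite !mxE mulrCA. Qed.
Lemma tens_suml m n p q (I : finType) (F : I -> 'M[C]_(m,n)) (B : 'M[C]_(p,q)) :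
  tensmx (\sum_i F i) B = \sum_i tensmx (F i) B.
Proof. by apply/matrixP=> i j; rewrite !mxE !summxE mulr_suml; apply: eq_bigr=> k _; rewrite !mxE. Qed.
Lemma tens11 m n : tensmx (1%:M : 'M[C]_m) (1%:M : 'M[C]_n) = 1%:M.
Proof.
apply/matrixP=> i j; case: (mxtens_indexP i)=> i1 i2; case: (mxtens_indexP j)=> j1 j2.
rewrite tensmxE !mxE (inj_eq (can_inj (@mxtens_indexK m n))) xpair_eqE.
by case: (i1 == j1); case: (i2 == j2); rewrite /= ?mulr1 ?mulr0 ?mul0r.
Qed.



Lemma adjPX : adj (PX R) = PX R.
Proof. apply/matrixP=> a b; rewrite !mxE conjc_nat; b2 a b; done. Qed.
Lemma adjPZ : adj (PZ R) = PZ R.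
Proof. apply/matrixP=> a b; rewrite !mxE; b2 a b => /=; rewrite ?rmorph0 ?rmorph1 ?expr0 ?expr1 ?rmorphN1 //;
  by apply/eqP; rewrite eq_complex /= ?oppr0 ?eqxx.
Qed.

Lemma twirl (M : 'M[C]_2) : \sum_(i : bool) \sum_(j : bool) pauli R i j *m M *m adj (pauli R i j)
  = (2 * \tr M) *: 1%:M.
Proof.
rewrite !big_bool /= /pauli !mul1mx !mulmx1 !adj_mul adjPX adjPZ adj1 !mulmx1.
apply/matrixP=> a b; rewrite /mxtrace.
b2 a b; ex2; rewrite ?expr0 ?expr1; ring.
Qed.

Lemma adj_tensc m p (u : 'cV[C]_m) (v : 'cV[C]_p) :
  @adj R (m*p) 1 (tensmx u v) = tensmx (adj u) (adj v).
Proof. exact: (adj_tens u v). Qed.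
Lemma tensmx_mul1 m p r s (A : 'cV[C]_m) (B : 'cV[C]_p) (C' : 'rV[C]_r) (D : 'rV[C]_s) :
  @mulmx C (m*p) 1 (r*s) (tensmx A B) (tensmx C' D) = tensmx (A *m C') (B *m D).
Proof. exact: (tensmx_mul A B C' D). Qed.

Lemma isq : invsqrt2 R * invsqrt2 R = 2^-1.
Proof.
rewrite /invsqrt2 -rmorphM /= -invfM -expr2 sqr_sqrtr ?ler0n //.
by rewrite rmorphV ?unitfE ?pnatr_eq0 //= rmorph_nat.
Qed.
Lemma conj_isq : conjc (invsqrt2 R) = invsqrt2 R.
Proof. exact: conjc_real. Qed.

Definition E (c c' : bool) : 'M[C]_2 := ket R c *m adj (ket R c').

Definition T (c c' : bool) : 'M[C]_(2*2) := tensmx (E c c') (E c c').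

Lemma PhiP_adj : PhiP R *m adj (PhiP R) = 2^-1 *: (T false false + T false true + (T true false + T true true)).
Proof.
rewrite /PhiP adjZ adjD !adj_tensc -scalemxAl -scalemxAr scalerA conj_isq isq.
rewrite mulmxDl !mulmxDr !tensmx_mul1.
reflexivity.
Qed.

Lemma adj_ket b : adj (ket R b) = (ket R b)^T.
Proof. by apply/matrixP=> i j; rewrite !mxE conjc_nat. Qed.

Lemma trE c c' : \tr (E c c') = (c == c')%:R.
Proof. rewrite /E adj_ket mxtrace_mulC trace_mx11 !mxE big_ord_recl big_ord_recl big_ord0 !mxE /=.
by case: c; case: c' => /=; ring. Qed.

Lemma sumE : \sum_(c : bool) E c c = 1%:M.
Proof.
rewrite big_bool /E !adj_ket; apply/matrixP=> a b; b2 a b; ex2; ring.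
Qed.

Definition W i j c c' : 'M[C]_(2*2) :=
  tensmx (pauli R i j *m E c c' *m adj (pauli R i j)) (E c c').

Lemma Phi_adj i j : Phi R i j *m adj (Phi R i j) =
  2^-1 *: (W i j false false + W i j false true + (W i j true false + W i j true true)).
Proof.
rewrite /Phi adj_mul adj_tens adj1 mulmxA -(mulmxA (tensmx _ _)) PhiP_adj.
rewrite -scalemxAr -scalemxAl; congr (_ *: _).
by rewrite !mulmxDr !mulmxDl /T /W !tensmx_mul !mul1mx !mulmx1.
Qed.

Lemma sumW c c' : \sum_(i : bool) \sum_(j : bool) W i j c c' = tensmx ((2 * (c == c')%:R) *: 1%:M) (E c c').
Proof.
rewrite /W; under eq_bigr do rewrite -tens_suml.
by rewrite -tens_suml twirl trE.
Qed.

Lemma sumPhi : \sum_(i : bool) \sum_(j : bool) Phi R i j *m adj (Phi R i j) = 1%:M.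
Proof.
under eq_bigr do under eq_bigr do rewrite Phi_adj.
under eq_bigr do rewrite -scaler_sumr !big_split /=.
rewrite -scaler_sumr !big_split /= !sumW /= !mulr0 !mulr1 !scale0r !tens0mx !addr0 add0r.
rewrite !tensZl scalerDr !scalerA mulVf ?pnatr_eq0 // !scale1r -tensDr.
have -> : E false false + E true true = 1%:M by rewrite -sumE big_bool addrC.
exact: tens11.
Qed.

Lemma pauli_unitary i j : adj (pauli R i j) *m pauli R i j = 1%:M.
Proof.
have hX : PX R *m PX R = 1%:M.
  apply/matrixP=> a b; b2 a b; ex2; ring.
have hZ : PZ R *m PZ R = 1%:M.
  apply/matrixP=> a b; b2 a b; ex2; rewrite ?expr0 ?expr1; ring.
case: i; case: j; rewrite /pauli ?mul1mx ?mulmx1 ?adj_mul ?adjPX ?adjPZ ?adj1 ?mul1mx ?mulmx1 //.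
by rewrite mulmxA -(mulmxA (PZ R)) hX mulmx1.
Qed.

Lemma tr_conj n (P : 'M[C]_n) (Y : 'M[C]_n) : adj P *m P = 1%:M -> \tr (P *m Y *m adj P) = \tr Y.
Proof. by move=> h; rewrite mxtrace_mulC mulmxA h mul1mx. Qed.

Lemma tr_teleport (sigma : 'M[C]_(2*2)) (X : 'M[C]_2) : \tr (teleport sigma X) = \tr X * \tr sigma.
Proof.
rewrite /teleport raddf_sum /=.
under eq_bigr do rewrite raddf_sum /=.
under eq_bigr do under eq_bigr do rewrite tr_conj ?pauli_unitary // mxtrace_mulC mulmxA.
under eq_bigr do rewrite -raddf_sum /= -mulmx_suml.
rewrite -raddf_sum /= -mulmx_suml.
have -> : \sum_(i : bool) \sum_(j : bool) adj (bellbra R i j) *m bellbra R i j = 1%:M.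
  under eq_bigr do under eq_bigr do rewrite /bellbra adj_tens adjK adj1 tensmx_mul mulmx1.
  under eq_bigr do rewrite -tens_suml.
  by rewrite -tens_suml sumPhi tens11.
by rewrite mul1mx tr_tens.
Qed.
End Q.

Section Q2.
Variable R : realType.
Local Notation C := R[i].

Lemma adj_sand n m (P : 'M[C]_(n,m)) (Y : 'M[C]_m) : adj (P *m Y *m adj P) = P *m adj Y *m adj P.
Proof. by rewrite !adj_mul adjK mulmxA. Qed.

Lemma herm_teleport (sigma : 'M[C]_(2*2)) (X : 'M[C]_2) :
  adj sigma = sigma -> adj X = X -> adj (teleport sigma X) = teleport sigma X.
Proof.
move=> hs hX; rewrite /teleport adj_sum; apply: eq_bigr => i _.
rewrite adj_sum; apply: eq_bigr => j _.
have hT : adj (tensmx X sigma) = tensmx X sigma by rewrite adj_tens hs hX.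
by rewrite adj_sand adj_sand hT.
Qed.

Lemma herm_rteleport (sigma : 'M[C]_(2*2)) (U X : 'M[C]_2) :
  adj sigma = sigma -> adj X = X -> adj (rteleport sigma U X) = rteleport sigma U X.
Proof.
move=> hs hX; rewrite /rteleport !adj_mul adjK herm_teleport //.
  by rewrite !mulmxA.
by rewrite !adj_mul adjK hX mulmxA.
Qed.

Lemma tr_rteleport (sigma : 'M[C]_(2*2)) (U X : 'M[C]_2) :
  unitary U -> \tr sigma = 1 -> \tr (rteleport sigma U X) = \tr X.
Proof.
move=> hU hs; rewrite /rteleport mxtrace_mulC mulmxA (mulmx1C hU) mul1mx.
by rewrite tr_teleport hs mulr1 mxtrace_mulC mulmxA hU mul1mx.
Qed.

Definition qf (v : 'cV[C]_2) (M : 'M[C]_2) : C := (adj v *m M *m v) 0 0.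

Lemma tr_proj (v : 'cV[C]_2) (M : 'M[C]_2) : \tr (Defs.proj v *m M) = qf v M.
Proof. by rewrite /Defs.proj /qf -mulmxA mxtrace_mulC trace_mx11. Qed.

Lemma tr_proj3 b c (A : 'M[C]_2) :
  \tr (Defs.proj (ket R b) *m A *m Defs.proj (ket R c)) = if b == c then qf (ket R b) A else 0.
Proof.
rewrite /qf /Defs.proj !adj_ket; case: b; case: c => /=; rewrite /mxtrace; ex2; ring.
Qed.

Lemma adj_proj (v : 'cV[C]_2) : adj (Defs.proj v) = Defs.proj v.
Proof. by rewrite /Defs.proj adj_mul adjK. Qed.

Lemma tr4 m n (X1 X2 X3 X4 : 'M[C]_m.+1) (Y1 Y2 Y3 Y4 : 'M[C]_n.+1) :
  \tr (tensmx X1 Y1 + tensmx X2 Y2 + (tensmx X3 Y3 + tensmx X4 Y4)) =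
  \tr X1 * \tr Y1 + \tr X2 * \tr Y2 + (\tr X3 * \tr Y3 + \tr X4 * \tr Y4).
Proof. by rewrite mxtraceD mxtraceD mxtraceD !tr_tens. Qed.

Lemma CZ_abs m n (P0 P1 A : 'M[C]_m.+1) (Z1 B M : 'M[C]_n.+1) :
  \tr (tensmx (1%:M : 'M[C]_m.+1) M *m ((tensmx P0 1%:M + tensmx P1 Z1) *m tensmx A B *m (tensmx P0 1%:M + tensmx P1 Z1))) =
  \tr (P0 *m A *m P0) * \tr (M *m B) + \tr (P1 *m A *m P0) * \tr (M *m (Z1 *m B)) +
  (\tr (P0 *m A *m P1) * \tr (M *m (B *m Z1)) + \tr (P1 *m A *m P1) * \tr (M *m (Z1 *m B *m Z1))).
Proof.
rewrite !(mulmxDl, mulmxDr).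
rewrite !tensmx_mul.
rewrite tr4.
by rewrite !mul1mx !mulmx1.
Qed.

Lemma CZ_formula (A B : 'M[C]_2) (v : 'cV[C]_2) :
  \tr (tensmx (1%:M : 'M[C]_2) (Defs.proj v) *m (CZ R *m tensmx A B *m adj (CZ R))) =
  qf (ket R false) A * qf v B + qf (ket R true) A * qf v (PZ R *m B *m PZ R).
Proof.
rewrite /CZ.
rewrite adjD.
rewrite adj_tens adj_tens adj1 adjPZ !adj_proj.
rewrite CZ_abs.
rewrite (tr_proj3 false false) (tr_proj3 true false) (tr_proj3 false true) (tr_proj3 true true).
rewrite (tr_proj v B) (tr_proj v (PZ R *m B)) (tr_proj v (B *m PZ R)) (tr_proj v (PZ R *m B *m PZ R)).
by rewrite !mul0r addr0 add0r.
Qed.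
End Q2.

Section Q3.
Variable R : realType.
Local Notation C := R[i].

Lemma adj00 (X : 'M[C]_1) : (adj X) 0 0 = conjc (X 0 0).
Proof. by rewrite !mxE. Qed.

Lemma conj_qf (v : 'cV[C]_2) (M : 'M[C]_2) : conjc (qf v M) = qf v (adj M).
Proof. by rewrite /qf -adj00 !adj_mul adjK mulmxA. Qed.

Lemma Im_conj (z : C) : conjc z = z -> complex.Im z = 0.
Proof. by case: z => a b /= [] h; lra. Qed.

Lemma Im_herm (v : 'cV[C]_2) (M : 'M[C]_2) : adj M = M -> complex.Im (qf v M) = 0.
Proof. by move=> h; apply: Im_conj; rewrite conj_qf h. Qed.

Lemma Re_mul (x y : C) : complex.Im x = 0 -> complex.Re (x * y) = complex.Re x * complex.Re y.
Proof. by case: x => a b; case: y => c d /= ->; rewrite mul0r subr0. Qed.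

Lemma qf_sum (M : 'M[C]_2) : qf (ket R false) M + qf (ket R true) M = \tr M.
Proof. rewrite /qf !adj_ket /mxtrace; ex2; ring. Qed.

Lemma expi_norm (t : R) : conjc (expi t) * expi t = 1.
Proof.
rewrite /expi /=; apply/eqP; rewrite eq_complex /=; apply/andP; split; apply/eqP.
  by rewrite -(cos2Dsin2 t); ring.
ring.
Qed.

Lemma conjN (x : C) : conjc (- x) = - conjc x.
Proof. exact: rmorphN. Qed.

Lemma qf_scale (c : C) (w : 'cV[C]_2) (M : 'M[C]_2) : qf (c *: w) M = conjc c * c * qf w M.
Proof. by rewrite /qf adjZ -!scalemxAl -scalemxAr !mxE mulrA. Qed.

Lemma sum_pm_raw (e : C) (M : 'M[C]_2) :
  qf (ket R false - e *: ket R true) M + qf (ket R false + e *: ket R true) M =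
  2 * (qf (ket R false) M + conjc e * e * qf (ket R true) M).
Proof.
rewrite -scaleNr /qf !adjD !adjZ conjN !adj_ket; ex2; ring.
Qed.

Lemma qf_pm_gen (e : C) (M : 'M[C]_2) : conjc e * e = 1 ->
  qf (invsqrt2 R *: (ket R false - e *: ket R true)) M =
  \tr M - qf (invsqrt2 R *: (ket R false + e *: ket R true)) M.
Proof.
move=> he; rewrite !qf_scale conj_isq isq.
have h := sum_pm_raw e M; rewrite he mul1r qf_sum in h.
rewrite -[qf (_ - _) M]addr0 -(subrr (qf (ket R false + e *: ket R true) M)) addrA h.
by field.
Qed.

Lemma qf_pm (t : R) (M : 'M[C]_2) : qf (ket_minus t) M = \tr M - qf (ket_plus t) M.
Proof. exact: (qf_pm_gen M (expi_norm t)). Qed.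

Lemma PZk0 : PZ R *m ket R false = ket R false.
Proof. apply/matrixP=> a b; case: (ord2' a) => ->; rewrite [b]ord1; ex2; rewrite ?expr0; ring. Qed.
Lemma PZk1 : PZ R *m ket R true = - ket R true.
Proof. apply/matrixP=> a b; case: (ord2' a) => ->; rewrite [b]ord1; ex2; rewrite ?expr0 ?expr1; ring. Qed.

Lemma PZ_plus (t : R) : PZ R *m ket_plus t = ket_minus t.
Proof. by rewrite /ket_plus /ket_minus -scalemxAr mulmxDr -scalemxAr PZk0 PZk1 scalerN. Qed.
Lemma PZ_minus (t : R) : PZ R *m ket_minus t = ket_plus t.
Proof. by rewrite /ket_plus /ket_minus -scalemxAr mulmxBr -scalemxAr PZk0 PZk1 scalerN opprK. Qed.

Lemma qf_Z (v : 'cV[C]_2) (B : 'M[C]_2) : qf v (PZ R *m B *m PZ R) = qf (PZ R *m v) B.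
Proof. by rewrite /qf adj_mul adjPZ !mulmxA. Qed.

Lemma expi_pi (t : R) : expi (t + pi) = - expi t.
Proof. by rewrite /expi cosDpi sinDpi; apply/eqP; rewrite eq_complex /= !eqxx. Qed.

Lemma plus_pi (t : R) : ket_plus (t + pi) = ket_minus t.
Proof. by rewrite /ket_plus /ket_minus expi_pi scaleNr. Qed.
Lemma minus_pi (t : R) : ket_minus (t + pi) = ket_plus t.
Proof. by rewrite /ket_plus /ket_minus expi_pi scaleNr opprK. Qed.

Lemma qf_plus1 (t : R) : qf (ket_plus t) 1%:M = 1.
Proof.
rewrite /ket_plus qf_scale conj_isq isq.
have -> : qf (ket R false + expi t *: ket R true) 1%:M = 1 + conjc (expi t) * expi t.
  rewrite /qf !adjD !adjZ !adj_ket; ex2; ring.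
by rewrite expi_norm; field.
Qed.
Lemma qf_minus1 (t : R) : qf (ket_minus t) 1%:M = 1.
Proof. by rewrite qf_pm qf_plus1 mxtrace1; ring. Qed.
Lemma qf_ket1 b : qf (ket R b) 1%:M = 1.
Proof. by rewrite /qf !adj_ket; case: b; ex2; ring. Qed.

Lemma qf_depol (v : 'cV[C]_2) (p : R) (M : 'M[C]_2) :
  qf v (depol p M) = p%:C%C * qf v M + ((1 - p) / 2)%:C%C * qf v 1%:M.
Proof.
rewrite /qf /depol mulmxDr mulmxDl -!scalemxAr -!scalemxAl.
by rewrite !mxE.
Qed.

Lemma herm_depol (p : R) (M : 'M[C]_2) : adj M = M -> adj (depol p M) = depol p M.
Proof. by move=> h; rewrite /depol adjD !adjZ !conjc_real adj1 h. Qed.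

Lemma tr_depol (p : R) (M : 'M[C]_2) : \tr M = 1 -> \tr (depol p M) = 1.
Proof.
move=> h; rewrite /depol mxtraceD !mxtraceZ h mxtrace1.
rewrite mulr1 -(rmorph_nat (real_complex R) 2) -!rmorphM -rmorphD /=.
transitivity ((1:R)%:C%C); last by [].
congr (_%:C%C).
by field.
Qed.
End Q3.

Section Q4.
Variable R : realType.
Local Notation C := R[i].

Definition g (x y : R) := x + y - 2 * x * y.

Lemma v_eq (th : R) d r : (if ~~ (d (+) r) then ket_minus (th + r%:R * pi) else ket_plus (th + r%:R * pi))
  = if d then ket_plus th else ket_minus th.
Proof. by case: d; case: r => /=; rewrite ?mulr1n ?mulr0n ?mul1r ?mul0r ?addr0 ?plus_pi ?minus_pi. Qed.

Lemma Re1 : complex.Re (1 : C) = 1. Proof. by []. Qed.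

Lemma fail_abs (A B : 'M[C]_2) (th : R) d r :
  adj A = A -> adj B = B -> \tr A = 1 -> \tr B = 1 ->
  complex.Re (\tr (tensmx (1%:M : 'M[C]_2)
     (Defs.proj (if ~~ (d (+) r) then ket_minus (th + r%:R * pi) else ket_plus (th + r%:R * pi)))
     *m (CZ R *m tensmx A B *m adj (CZ R))))
  = g (complex.Re (qf (ket R d) A)) (complex.Re (qf (ket_plus th) B)).
Proof.
move=> hA hB tA tB; rewrite CZ_formula v_eq.
have iA b : complex.Im (qf (ket R b) A) = 0 by exact: Im_herm.
have iB : complex.Im (qf (ket_plus th) B) = 0 by exact: Im_herm.
have sA := qf_sum A; rewrite tA in sA.
have sA' : complex.Re (qf (ket R false) A) + complex.Re (qf (ket R true) A) = 1.
  by rewrite -raddfD /= sA.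
rewrite /g; case: d sA'.
  rewrite qf_Z PZ_plus qf_pm tB raddfD /= !Re_mul // raddfB /= => h.
  have -> : complex.Re (qf (ket R false) A) = 1 - complex.Re (qf (ket R true) A) by lra.
  ring.
rewrite qf_Z PZ_minus qf_pm tB raddfD /= !Re_mul // raddfB /= => h.
have -> : complex.Re (qf (ket R true) A) = 1 - complex.Re (qf (ket R false) A) by lra.
ring.
Qed.

Lemma tr_projv (v : 'cV[C]_2) : \tr (Defs.proj v) = qf v 1%:M.
Proof. by rewrite -[Defs.proj v]mulmx1 tr_proj. Qed.

Lemma Re_depol (v : 'cV[C]_2) (p : R) (M : 'M[C]_2) : qf v 1%:M = 1 ->
  complex.Re (qf v (depol p M)) = p * complex.Re (qf v M) + (1 - p) / 2.
Proof.
move=> h; rewrite qf_depol h mulr1 raddfD /= Re_mul //=.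
Qed.

Lemma round_fail_eq (sigma : 'M[C]_(2*2)) (U : 'M[C]_2) tf (p : R) d k r :
  adj sigma = sigma -> \tr sigma = 1 -> unitary U ->
  round_fail sigma U tf p d k r =
  g (if tf then fid sigma U (ket R d) else p * fid sigma U (ket R d) + (1 - p) / 2)
    (if tf then p * fid sigma U (ket_plus (theta_of R k)) + (1 - p) / 2
     else fid sigma U (ket_plus (theta_of R k))).
Proof.
move=> hs ts hU; rewrite /round_fail; cbv zeta.
set rd := rteleport sigma U (Defs.proj (ket R d)).
set rt := rteleport sigma U (Defs.proj (ket_plus (theta_of R k))).
have hrd : adj rd = rd by exact: herm_rteleport hs (adj_proj _).
have hrt : adj rt = rt by exact: herm_rteleport hs (adj_proj _).
have trd : \tr rd = 1 by rewrite tr_rteleport // tr_projv qf_ket1.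
have trt : \tr rt = 1 by rewrite tr_rteleport // tr_projv qf_plus1.
case: tf.
  rewrite fail_abs ?herm_depol ?tr_depol // Re_depol ?qf_plus1 //.
rewrite fail_abs ?herm_depol ?tr_depol // Re_depol ?qf_ket1 //.
Qed.

Lemma sum_g (a : R) (y : 'I_8 -> R) :
  \sum_(k < 8) \sum_(r : bool) g a (y k) = 2 * (8 * a + (1 - 2 * a) * \sum_(k < 8) y k).
Proof.
under eq_bigr do rewrite big_bool.
rewrite /g !big_ord_recr !big_ord0 /=; ring.
Qed.

Lemma avg_abs (x : bool -> R) (y : 'I_8 -> R) :
  32%:R^-1 * \sum_(d : bool) \sum_(k < 8) \sum_(r : bool) g (x d) (y k) =
  2^-1 - (x false + x true - 1) * (\sum_(k < 8) y k - 4) / 8.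
Proof.
rewrite big_bool /= !sum_g.
by field.
Qed.

Lemma avg_fail_eq (sigma : 'M[C]_(2*2)) (U : 'M[C]_2) tf (p : R) :
  adj sigma = sigma -> \tr sigma = 1 -> unitary U ->
  avg_fail sigma U tf p = 2^-1 + p * (Fdummy sigma U * (1 - Ftrap sigma U)
      + Ftrap sigma U * (1 - Fdummy sigma U) - 2^-1).
Proof.
move=> hs ts hU; rewrite /avg_fail.
under eq_bigr do under eq_bigr do under eq_bigr do rewrite round_fail_eq //.
rewrite (avg_abs (fun d => if tf then fid sigma U (ket R d) else p * fid sigma U (ket R d) + (1 - p) / 2)
   (fun k => if tf then p * fid sigma U (ket_plus (theta_of R k)) + (1 - p) / 2
     else fid sigma U (ket_plus (theta_of R k)))).
rewrite /Fdummy /Ftrap.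
set S := \sum_(k < 8) fid sigma U (ket_plus (theta_of R k)).
case: tf.
  rewrite big_split /= -mulr_sumr sumr_const card_ord -/S.
  by field.
rewrite -/S.
by field.
Qed.
End Q4.

Unset Implicit Arguments. Set Strict Implicit.
Import order.Order.TTheory.

Lemma tangent (R : realType) (x m : R) : expR (- m) * (1 + m - x) <= expR (- x).
Proof.
have -> : - x = - m + (m - x) by ring.
rewrite expRD ler_wpM2l ?expR_ge0 //.
rewrite addrA addrK; exact: expR_ge1Dx.
Qed.

Theorem lemma3 (R : realType) (sigma : 'M[R[i]]_(2 * 2)) (U : 'M[R[i]]_2)
    (rate Tc : R) (dΩ : measure_display) (Ω : measurableType dΩ)
    (P : probability Ω R) (dt : Ω -> R) (trap_first : bool) :
  density sigma -> unitary U -> 0 < rate -> 0 < Tc ->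
  measurable_fun setT dt -> P.-integrable setT (EFin \o dt) ->
  (forall w, 0 <= dt w) -> ('E_P[dt] = (rate^-1)%:E)%E ->
  let Fd := Fdummy sigma U in
  let Ft := Ftrap sigma U in
  Fd * (1 - Ft) + Ft * (1 - Fd) <= 2^-1 ->
  ('E_P[fun w => avg_fail sigma U trap_first (expR (- dt w / Tc))]
     <= (expR (- (rate * Tc)^-1) * (Fd * (1 - Ft) + Ft * (1 - Fd))
         + 2^-1 * (1 - expR (- (rate * Tc)^-1)))%:E)%E.
Proof.
move=> dens hU rate0 Tc0 mdt idt dt0 Edt Fd Ft hA.
have [hs [_ ts]] := dens.
set c := Fd * (1 - Ft) + Ft * (1 - Fd) - 2^-1.
have c0 : c <= 0 by rewrite /c; lra.
set m := (rate * Tc)^-1.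
set e := expR (- m).
have Hf w : avg_fail sigma U trap_first (expR (- dt w / Tc)) = 2^-1 + c * expR (- dt w / Tc).
  by rewrite avg_fail_eq // /c /Fd /Ft; ring.
pose f w := 2^-1 + c * expR (- dt w / Tc).
pose a := 2^-1 + c * e * (1 + m).
pose b := - (c * e / Tc).
pose h w := a + b * dt w.
have fh w : f w <= h w.
  rewrite /f /h /a /b /= -addrA lerD2l.
  have := @tangent R (dt w / Tc) m; rewrite -/e => t.
  have -> : - dt w / Tc = - (dt w / Tc) by rewrite mulNr.
  have -> : c * e * (1 + m) + - (c * e / Tc) * dt w = c * (e * (1 + m - dt w / Tc)) by field; exact: lt0r_neq0.
  exact: ler_wnM2l.
have m1 : measurable_fun setT (fun w => - dt w / Tc).
  apply: measurable_realfun.measurable_funM => //.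
  exact: measurable_realfun.measurable_funN.
have m2 := measurableT_comp (@measurable_realfun.measurable_expR R) m1.
have mf : measurable_fun setT f.
  rewrite /f; apply: measurable_realfun.measurable_funD => //.
  apply: measurable_realfun.measurable_funM => //.
have ifn : P.-integrable setT (EFin \o f).
  apply: (@le_integrable _ _ _ P setT measurableT (EFin \o f) (EFin \o cst (2^-1 - c))).
  - exact/measurable_realfun.measurable_EFinP.
  - move=> w _ /=; rewrite lee_fin /f.
    have E1 : expR (- dt w / Tc) <= 1.
      by rewrite expR_le1 mulNr oppr_le0; apply: divr_ge0 (dt0 w) _; lra.
    have E0 : 0 <= expR (- dt w / Tc) by exact: expR_ge0.
    have cE : c <= c * expR (- dt w / Tc) by rewrite -[X in X <= _]mulr1 ler_wnM2l.
    rewrite (ger0_norm (x := 2^-1 - c)); last by lra.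
    have cE2 : c * expR (- dt w / Tc) <= 0 by exact: mulr_le0_ge0.
    rewrite ler_norml; apply/andP; split; lra.
  - exact: finite_measure_integrable_cst.
have ih : P.-integrable setT (EFin \o h).
  have -> : EFin \o h = ((EFin \o cst a) \+ (fun w => b%:E * (EFin \o dt) w))%E.
    by apply/funext=> w; rewrite /h /= EFinD EFinM.
  apply: integrableD => //; first exact: finite_measure_integrable_cst.
  exact: integrableZl.
have Edt' : (\int[P]_(w in setT) (EFin \o dt) w = (rate^-1)%:E)%E.
  by move: Edt; rewrite unlock.
rewrite unlock.
under eq_integral do rewrite Hf.
apply: (le_trans (le_integral _ ifn ih _)) => //.
  by move=> w _; rewrite lee_fin fh.
have -> : EFin \o h = ((EFin \o cst a) \+ (fun w => b%:E * (EFin \o dt) w))%E.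
  by apply/funext=> w; rewrite /h /= EFinD EFinM.
rewrite integralD //; first last.
- exact: integrableZl.
- exact: finite_measure_integrable_cst.
rewrite integralZl // Edt'.
have hc : (\int[P]_(x in setT) (cst a%:E) x = a%:E)%E.
  by have := expectation_cst P a; rewrite unlock.
rewrite (_ : EFin \o cst a = cst a%:E) // hc.
rewrite -EFinM -EFinD lee_fin.
have -> : a + b * rate^-1 = e * (Fd * (1 - Ft) + Ft * (1 - Fd)) + 2^-1 * (1 - e).
  rewrite /a /b /c /m; field.
  by rewrite !lt0r_neq0.
by [].
Qed.
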